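(* Let $\gamma=yxyy^*\in\mathcal{V}^1Q$, $\Pi_0=[xx^*,x^*]+[yx^*,y^*]$ and $\Pi_\infty=[yy^*,yxx^*+y^2y^*]$ in $\mathcal{V}^2Q$. Then $[\gamma,\Pi_0]_{\mathcal V}=\Pi_\infty$ and $[\gamma,\Pi_\infty]_{\mathcal V}=0$.
   Context: $Q$ is the quiver with one vertex and two loops $x,y$, so $\mathbb{C}Q=\mathbb{C}\langle x,y\rangle$ and $\mathbb{C}\bar Q=\mathbb{C}\langle x,y,x^*,y^*\rangle$, graded by the number of starred letters. $\mathcal{V}Q$ is the quotient of $\mathbb{C}\bar Q$ by the span of $PR-(-1)^{pr}RP$ for $P,R$ homogeneous of degrees $p,r$; $[u,v]=uv-vu$. For $w\in\{x,y,x^*,y^*\}$, $D_w(x_1\cdots x_n)=\sum_{i:x_i=w}(-1)^{\lambda_i\mu_i}x_{i+1}\cdots x_nx_1\cdots x_{i-1}$, $\lambda_i$ (resp. $\mu_i$) the number of starred letters among $x_{i+1},\dots,x_n$ (resp. $x_1,\dots,x_i$). For $\gamma\in\mathcal{V}^rQ,\delta\in\mathcal{V}^sQ$: $[\gamma,\delta]_{\mathcal V}=\sum_{a\in\{x,y\}}\big(D_{a^*}(\gamma)D_a(\delta)-(-1)^{(r-1)(s-1)}D_{a^*}(\delta)D_a(\gamma)\big)$ modulo the relations. *)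

(* Defs.v *)
From HB Require Import structures.
From mathcomp Require Import all_boot all_order all_algebra.
From mathcomp Require Import algC.
From Stdlib Require List.
Set Implicit Arguments. Unset Strict Implicit. Unset Printing Implicit Defensive.
Import Order.TTheory GRing.Theory Num.Theory.
Local Open Scope ring_scope.

Inductive letter := X | Y | Xs | Ys.
Definition letter_eq_dec : forall a b : letter, {a = b} + {a <> b}.
Proof. decide equality. Defined.
HB.instance Definition _ := comparableMixin letter_eq_dec.

Definition starred (l : letter) : bool :=
  match l with Xs | Ys => true | _ => false end.

Definition word := seq letter.
Definition nstar (w : word) : nat := count starred w.

(* An element of C<x,y,x*,y*> is given by its coefficient function on words;
   it is a (noncommutative) polynomial when it has finite support, i.e. (the
   alphabet being finite) when its support has bounded length. *)
Definition ncs := word -> algC.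
Definition is_poly (f : ncs) : Prop := exists n, forall w, (n < size w)%N -> f w = 0.
Definition homog (p : nat) (f : ncs) : Prop := forall w, f w != 0 -> nstar w = p.

Definition nzero : ncs := fun _ => 0.
Definition nadd (f g : ncs) : ncs := fun w => f w + g w.
Definition nsub (f g : ncs) : ncs := fun w => f w - g w.
Definition nscale (c : algC) (f : ncs) : ncs := fun w => c * f w.
Definition nmul (f g : ncs) : ncs :=
  fun w => \sum_(i < (size w).+1) f (take i w) * g (drop i w).
Definition gen (l : letter) : ncs := fun w => if w == [:: l] then 1 else 0.
Definition ncomm (f g : ncs) : ncs := nsub (nmul f g) (nmul g f).

Definition grcomm (p r : nat) (P R : ncs) : ncs :=
  nsub (nmul P R) (nscale ((-1) ^+ (p * r)) (nmul R P)).
Definition in_rel_span (h : ncs) : Prop :=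
  exists l : seq (algC * ncs * ncs * nat * nat),
    List.Forall (fun t => let: (c, P, R, p, r) := t in
        [/\ is_poly P, is_poly R, homog p P & homog r R]) l /\
    forall w, h w = \sum_(t <- l) let: (c, P, R, p, r) := t in
                                   c * grcomm p r P R w.
(* equality of the classes of f and g in VQ *)
Definition vq_eq (f g : ncs) : Prop := in_rel_span (nsub f g).

(* D_a(x_1...x_n) = sum_{i : x_i = a} (-1)^{lambda_i mu_i} x_{i+1}..x_n x_1..x_{i-1},
   extended linearly: the coefficient of v = b ++ a' in D_a f collects the
   words a' ++ a :: b of f, with lambda = nstar b, mu = nstar a' + [a starred]. *)
Definition Dw (a : letter) (f : ncs) : ncs :=
  fun v => \sum_(i < (size v).+1)
     let b := take i v in let a' := drop i v in
     (-1) ^+ (nstar b * (nstar a' + starred a)) * f (a' ++ a :: b).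

(* [gamma, delta]_V for gamma in V^r, delta in V^s (on representatives) *)
Definition vbracket (r s : nat) (g d : ncs) : ncs :=
  nsub (nadd (nmul (Dw Xs g) (Dw X d)) (nmul (Dw Ys g) (Dw Y d)))
       (nscale ((-1) ^ ((r%:Z - 1) * (s%:Z - 1)))
               (nadd (nmul (Dw Xs d) (Dw X g)) (nmul (Dw Ys d) (Dw Y g)))).

Definition gamma9 : ncs := nmul (nmul (nmul (gen Y) (gen X)) (gen Y)) (gen Ys).
Definition Pi0 : ncs :=
  nadd (ncomm (nmul (gen X) (gen Xs)) (gen Xs))
       (ncomm (nmul (gen Y) (gen Xs)) (gen Ys)).
Definition Piinf : ncs :=
  ncomm (nmul (gen Y) (gen Ys))
        (nadd (nmul (nmul (gen Y) (gen X)) (gen Xs))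
              (nmul (nmul (gen Y) (gen Y)) (gen Ys))).

(* Main.v *)
Require Import Defs.
From mathcomp Require Import all_boot all_order all_algebra.
From mathcomp Require Import algC.
From mathcomp Require Import zify.
From Stdlib Require Import FunctionalExtensionality.
From Stdlib Require List.
Set Implicit Arguments. Unset Strict Implicit. Unset Printing Implicit Defensive.
Import Order.TTheory GRing.Theory Num.Theory.
Local Open Scope ring_scope.

Definition poly := seq (int * word).
Definition coefZ (p : poly) (w : word) : int :=
  foldr (fun t acc => (if t.2 == w then t.1 else 0) + acc) 0 p.
Definition evalP (p : poly) : ncs := fun w => (coefZ p w)%:~R.

Lemma coefZE p w : coefZ p w = \sum_(t <- p) (if t.2 == w then t.1 else 0).
Proof. by elim: p => [|t p IH] /=; rewrite ?big_nil ?big_cons ?IH. Qed.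

Lemma coefZ_cat p q w : coefZ (p ++ q) w = coefZ p w + coefZ q w.
Proof. by rewrite !coefZE big_cat. Qed.

Lemma naddE p q : nadd (evalP p) (evalP q) = evalP (p ++ q).
Proof. apply: functional_extensionality => w; by rewrite /nadd /evalP coefZ_cat intrD. Qed.

Definition pscale (k : int) (p : poly) : poly := [seq (k * t.1, t.2) | t <- p].
Lemma coefZ_scale k p w : coefZ (pscale k p) w = k * coefZ p w.
Proof.
elim: p => [|t p IH] /=; first by rewrite mulr0.
by rewrite IH mulrDr; case: eqP => _; rewrite ?mulr0.
Qed.

Lemma nsubE p q : nsub (evalP p) (evalP q) = evalP (p ++ pscale (-1) q).
Proof.
apply: functional_extensionality => w.
by rewrite /nsub /evalP coefZ_cat coefZ_scale mulN1r intrD intrN.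
Qed.

Lemma nscaleE k p : nscale (k%:~R) (evalP p) = evalP (pscale k p).
Proof. apply: functional_extensionality => w; by rewrite /nscale /evalP coefZ_scale intrM. Qed.

Lemma nscale1 f : nscale 1 f = f.
Proof. apply: functional_extensionality => w; by rewrite /nscale mul1r. Qed.

Lemma genE l : gen l = evalP [:: (1, [:: l])].
Proof.
apply: functional_extensionality => w; rewrite /gen /evalP /= addr0 eq_sym.
by case: (_ == _).
Qed.

Lemma nzeroE : nzero = evalP [::].
Proof. by apply: functional_extensionality => w. Qed.

Lemma signZ n : ((-1 : int) ^+ n)%:~R = (-1 : algC) ^+ n.
Proof. elim: n => // n IH; by rewrite !exprS intrM IH. Qed.

Lemma intr_sum (I : Type) (r : seq I) (F : I -> int) :
  (\sum_(i <- r) F i)%:~R = \sum_(i <- r) (F i)%:~R :> algC.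
Proof. elim: r => [|i r IH]; by rewrite ?big_nil ?big_cons ?intrD ?IH. Qed.

Definition pmul (p q : poly) : poly := [seq (s.1 * t.1, s.2 ++ t.2) | s <- p, t <- q].

Lemma split_sum (u v w : word) (a b : int) :
  \sum_(i < (size w).+1) (if u == take i w then a else 0) * (if v == drop i w then b else 0)
  = if u ++ v == w then a * b else 0.
Proof.
case: eqP => [<-|ne].
- have hi : (size u < (size (u ++ v)).+1)%N by rewrite size_cat ltnS leq_addr.
  rewrite (bigD1 (Ordinal hi)) //= take_size_cat // drop_size_cat // !eqxx big1 ?addr0 //.
  move=> i hne; case: eqP => [hu|]; last by rewrite mul0r.
  exfalso; move/eqP: hne; apply; apply: val_inj => /=.
  have := congr1 size hu; rewrite size_takel; first by move=> ->.
  by rewrite -ltnS.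
- apply: big1 => i _; case: eqP => hu; case: eqP => hv; rewrite ?mulr0 ?mul0r //.
  by exfalso; apply: ne; rewrite hu hv cat_take_drop.
Qed.

Lemma nmulE p q : nmul (evalP p) (evalP q) = evalP (pmul p q).
Proof.
apply: functional_extensionality => w; rewrite /nmul /evalP.
under eq_bigr do rewrite -intrM.
rewrite -intr_sum; congr (_ %:~R).
rewrite coefZE big_allpairs_dep /=.
under eq_bigr do rewrite !coefZE big_distrl /=.
under eq_bigr do under eq_bigr do rewrite big_distrr /=.
rewrite exchange_big; apply: eq_bigr => s _.
rewrite exchange_big; apply: eq_bigr => t _ /=.
exact: split_sum.
Qed.

Definition dw1 (a : letter) (t : int * word) : poly :=
  [seq (t.1 * (-1) ^+ (nstar (drop j.+1 t.2) * (nstar (take j t.2) + starred a)),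
        drop j.+1 t.2 ++ take j t.2) | j <- iota 0 (size t.2) & nth X t.2 j == a].
Definition pDw a (p : poly) : poly := flatten [seq dw1 a t | t <- p].

Lemma coefZ_flatten (f : int * word -> poly) p w :
  coefZ (flatten [seq f t | t <- p]) w = \sum_(t <- p) coefZ (f t) w.
Proof. elim: p => [|t p IH] /=; by rewrite ?big_nil ?big_cons ?coefZ_cat ?IH. Qed.

Lemma dw1_word (a : letter) (c : int) (u v : word) :
  \sum_(i < (size v).+1) (-1) ^+ (nstar (take i v) * (nstar (drop i v) + starred a)) *
      (if u == drop i v ++ a :: take i v then c else 0)
  = coefZ (dw1 a (c, u)) v.
Proof.
rewrite coefZE /dw1 big_map big_filter /=.
have -> : iota 0 (size u) = index_iota 0 (size u) by rewrite /index_iota subn0.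
rewrite -(big_mkord (fun _ => true) (fun i => (-1) ^+ (nstar (take i v) * (nstar (drop i v) + starred a)) *
      (if u == drop i v ++ a :: take i v then c else 0))).
have hs : forall i, size (drop i v ++ a :: take i v) = (size v).+1.
  by move=> i; rewrite size_cat /= addnS addnC -size_cat cat_take_drop.
case: (boolP (size u == (size v).+1)) => [/eqP hu | hu].
- rewrite hu [in RHS]big_mkcond [in RHS]big_nat_rev /=.
  apply: eq_big_nat => i /andP[_ hi].
  rewrite add0n subSS.
  have hin : (i <= size v)%N by rewrite -ltnS.
  set n := size v in hu hi hin *.
  case: (boolP (u == drop i v ++ a :: take i v)) => [/eqP hu' | hne].
  + subst u.
    have hd : size (drop i v) = (n - i)%N by rewrite size_drop.
    rewrite nth_cat hd ltnn subnn /= eqxx.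
    rewrite drop_cat hd ltnNge leqnSn /= subSnn /= drop0.
    rewrite take_size_cat // cat_take_drop eqxx mulrC.
    by [].
  + rewrite mulr0; case: eqP => hn //; case: eqP => hv //; exfalso.
    move/negP: hne; apply; apply/eqP.
    have hj : (n - i < size u)%N by rewrite hu ltnS leq_subr.
    have hdr : size (drop (n - i).+1 u) = i.
      by rewrite size_drop hu subSS subKn.
    rewrite -hv take_size_cat // drop_size_cat //.
    by rewrite -{1}hn -(drop_nth X hj) cat_take_drop.
- rewrite big1; last first.
    move=> i _; case: eqP => [e|]; last by rewrite mulr0.
    by move: hu; rewrite e hs eqxx.
  rewrite big1_seq //= => j /andP[_ hj]; case: eqP => // e.
  rewrite mem_index_iota in hj; case/andP: hj => _ hj.
  exfalso; move: hu; rewrite -e size_cat size_drop size_takel; last exact: ltnW.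
  by move=> /negP hu; apply: hu; apply/eqP; lia.
Qed.

Lemma DwE a p : Dw a (evalP p) = evalP (pDw a p).
Proof.
apply: functional_extensionality => v; rewrite /Dw /evalP /=.
under eq_bigr do rewrite -signZ -intrM.
rewrite -intr_sum; congr (_ %:~R).
rewrite /pDw coefZ_flatten.
under eq_bigr do rewrite coefZE big_distrr /=.
rewrite exchange_big; apply: eq_bigr => [[c u]] _ /=.
rewrite -dw1_word; apply: eq_bigr => i _; by rewrite eq_sym.
Qed.

Definition wd (u : word) : ncs := evalP [:: (1, u)].

Definition relP (t : int * word * word) : poly :=
  let: (c, u, v) := t in
  pscale c (pmul [:: (1, u)] [:: (1, v)] ++
            pscale (-1) (pscale ((-1) ^+ (nstar u * nstar v)) (pmul [:: (1, v)] [:: (1, u)]))).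

Definition mkrel (t : int * word * word) : algC * ncs * ncs * nat * nat :=
  let: (c, u, v) := t in (c%:~R, wd u, wd v, nstar u, nstar v).

Lemma sum_rel T w :
  \sum_(t <- map mkrel T) (let: (c, P, R, p, r) := t in c * grcomm p r P R w)
  = evalP (flatten (map relP T)) w.
Proof.
elim: T => [|[[c u] v] T IH]; first by rewrite big_nil.
have -> : flatten (map relP ((c, u, v) :: T)) = relP (c, u, v) ++ flatten (map relP T) by [].
rewrite big_cons IH /evalP coefZ_cat intrD; congr (_ + _).
rewrite /grcomm /wd -signZ !nmulE nscaleE nsubE.
by rewrite /evalP /relP coefZ_scale intrM.
Qed.

Lemma wd_poly u : is_poly (wd u).
Proof.
exists (size u) => w hw; rewrite /wd /evalP /= addr0.
case: eqP => // e; by rewrite e ltnn in hw.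
Qed.

Lemma wd_homog u : homog (nstar u) (wd u).
Proof.
move=> w; rewrite /wd /evalP /= addr0.
by case: (u =P w) => [-> //|_]; rewrite mulr0z eqxx.
Qed.

Lemma Forall_rel T :
  List.Forall (fun t => let: (c, P, R, p, r) := t in
        [/\ is_poly P, is_poly R, homog p P & homog r R]) (map mkrel T).
Proof.
apply/List.Forall_forall => x /List.in_map_iff [[[c u] v] [<- _]] /=.
by split; [exact: wd_poly | exact: wd_poly | exact: wd_homog | exact: wd_homog].
Qed.

Lemma coefZ_notin p w : w \notin map snd p -> coefZ p w = 0.
Proof.
elim: p => //= t p IH; rewrite in_cons negb_or => /andP[h1 h2].
by rewrite IH // addr0 eq_sym (negbTE h1).
Qed.

Lemma evalP_ext P Q : all (fun u => coefZ P u == coefZ Q u) (map snd (P ++ Q)) ->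
  forall w, evalP P w = evalP Q w.
Proof.
move=> /allP H w; rewrite /evalP.
case: (boolP (w \in map snd (P ++ Q))) => [/H/eqP -> //|hn].
rewrite map_cat mem_cat negb_or in hn; case/andP: hn => h1 h2.
by rewrite !coefZ_notin.
Qed.

Lemma vbr12 g d : vbracket 1 2 g d =
  nsub (nadd (nmul (Dw Xs g) (Dw X d)) (nmul (Dw Ys g) (Dw Y d)))
       (nadd (nmul (Dw Xs d) (Dw X g)) (nmul (Dw Ys d) (Dw Y g))).
Proof. by rewrite /vbracket subrr mul0r expr0z nscale1. Qed.

Definition T1 : seq (int * word * word) :=
 [:: (2%:Z, [:: Y], [:: X; Y; Xs; Ys]); (2%:Z, [:: Xs], [:: X; Y; Ys; Y]); (-2%:Z, [:: ], [:: X; Xs; Y; Ys; Y]); (2%:Z, [:: Ys], [:: Y; Y; Ys; Y]); (-2%:Z, [:: Y; Xs], [:: X; Y; Ys]); (-2%:Z, [:: Y; Xs; Ys; Y], [:: X]); (-1%:Z, [:: Y; Ys; Y], [:: X; Xs]); (-1%:Z, [:: Y; Ys], [:: Y; Y; Ys]); (1%:Z, [:: Y], [:: X; Xs; Y; Ys]); (1%:Z, [:: ], [:: Y; Y; Ys; Y; Ys])].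
Definition T2 : seq (int * word * word) :=
 [:: (2%:Z, [:: Y; X; Y; Ys; Y], [:: X; Xs]); (-2%:Z, [:: Y; X; Y], [:: X; Xs; Y; Ys]); (2%:Z, [:: Y], [:: X; Y; Ys; Y; Y; Ys]); (-2%:Z, [:: Y], [:: X; Y; Y; Ys; Y; Ys]); (-2%:Z, [:: Y], [:: X; Y; Ys; Y; Ys; Y]); (-2%:Z, [:: Y; Ys; Y], [:: X; Y; Ys; Y]); (2%:Z, [:: Y], [:: X; Xs; Y; X; Y; Ys]); (2%:Z, [:: Y], [:: X; Xs; Y; Ys; Y; X]); (2%:Z, [:: Y; Y; Ys; Y], [:: X; Y; Ys]); (2%:Z, [:: Y; Y; Ys; Y; Ys; Y], [:: X]); (-2%:Z, [:: Y; Ys; Y; Y], [:: X; Y; Ys]); (-2%:Z, [:: Y; Ys; Y; Y; Ys; Y], [:: X])].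

Ltac normP := rewrite ?vbr12 /gamma9 /Pi0 /Piinf /ncomm ?nzeroE !genE;
  repeat (rewrite ?nmulE ?naddE ?nsubE ?DwE).

Theorem mainTheorem9 :
  vq_eq (vbracket 1 2 gamma9 Pi0) Piinf /\ vq_eq (vbracket 1 2 gamma9 Piinf) nzero.
Proof.
split.
- exists (map mkrel T1); split; first exact: Forall_rel.
  move=> w; rewrite sum_rel; normP.
  by apply: evalP_ext; vm_compute.
- exists (map mkrel T2); split; first exact: Forall_rel.
  move=> w; rewrite sum_rel; normP.
  by apply: evalP_ext; vm_compute.
Qed.
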